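(* Let $K$ be an algebraically closed field of characteristic zero, $\Phi=(f_1,\dots,f_n)$ a polynomial automorphism of $K^n$ with jacobian $\lambda\in K^*$, and $\Phi^{-1}=(g_1,\dots,g_n)$. For $i=1,\dots,n$ define derivations $\delta_i(P)=\lambda^{-1}\frac{\partial P}{\partial x_i}$ and $\Delta_i(P)=\mathrm{j}(g_1,\dots,g_{i-1},P,g_{i+1},\dots,g_n)$ on $K[x_1,\dots,x_n]$. Then for every $i$ and every $P$, $\Delta_i(P\circ\Phi^{-1})=\delta_i(P)\circ\Phi^{-1}$ and $\Delta_i(P)\circ\Phi=\delta_i(P\circ\Phi)$. Moreover every $\Delta_i$ is locally nilpotent.
   Context: $\mathrm{j}(P_1,\dots,P_n)=\det(\partial P_i/\partial x_j)_{1\le i,j\le n}$ is the jacobian determinant. *)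

(* Defs.v *)
From HB Require Import structures.
From mathcomp Require Import all_boot all_order all_algebra all_field.
From mathcomp Require Import mpoly.
Set Implicit Arguments. Unset Strict Implicit. Unset Printing Implicit Defensive.
Import GRing.Theory.
Local Open Scope ring_scope.

Definition jacobian_mx (R : comNzRingType) (n : nat) (f : n.-tuple {mpoly R[n]})
  : 'M[{mpoly R[n]}]_n :=
  \matrix_(i < n, j < n) (tnth f i)^`M(j).

Definition jac (R : comNzRingType) (n : nat) (f : n.-tuple {mpoly R[n]})
  : {mpoly R[n]} := \det (jacobian_mx f).

Definition replace_at (R : comNzRingType) (n : nat) (g : n.-tuple {mpoly R[n]})
  (i : 'I_n) (P : {mpoly R[n]}) : n.-tuple {mpoly R[n]} :=
  [tuple if k == i then P else tnth g k | k < n].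

Definition Delta (R : comNzRingType) (n : nat) (g : n.-tuple {mpoly R[n]})
  (i : 'I_n) (P : {mpoly R[n]}) : {mpoly R[n]} :=
  jac (replace_at g i P).

Definition delta (R : fieldType) (n : nat) (lambda : R) (i : 'I_n)
  (P : {mpoly R[n]}) : {mpoly R[n]} :=
  lambda^-1 *: P^`M(i).

Definition poly_inverse (R : comNzRingType) (n : nat)
  (f g : n.-tuple {mpoly R[n]}) : Prop :=
  (forall i : 'I_n, tnth f i \mPo g = 'X_i) /\
  (forall i : 'I_n, tnth g i \mPo f = 'X_i).

Definition locally_nilpotent (T : nmodType) (D : T -> T) : Prop :=
  forall P : T, exists m : nat, iter m D P = 0.

(* Main.v *)
Require Import Defs.
From HB Require Import structures.
From mathcomp Require Import all_boot all_order all_algebra all_field.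
From mathcomp Require Import mpoly.
Set Implicit Arguments. Unset Strict Implicit. Unset Printing Implicit Defensive.
Import GRing.Theory.
Local Open Scope ring_scope.

Section Aux.
Variables (R : comNzRingType) (n : nat).

Lemma mpoly_gen_ind (S : {mpoly R[n]} -> Prop) :
  (forall c, S c%:MP) -> (forall i, S 'X_i) ->
  (forall p q, S p -> S q -> S (p + q)) ->
  (forall p q, S p -> S q -> S (p * q)) -> forall p, S p.
Proof.
move=> hC hX hD hM p; rewrite (mpolyE p).
apply: (big_ind S); [by rewrite -mpolyC0 | exact: hD|] => m _.
rewrite -mul_mpolyC; apply: (hM) => //.
rewrite mpolyXE_id; apply: (big_ind S); [by rewrite -mpolyC1 | exact: hM|].
move=> i _; elim: (m i) => [|k ih]; first by rewrite expr0 -mpolyC1.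
by rewrite exprS; apply: (hM).
Qed.

Lemma mderivXi (i l : 'I_n) : ('X_i : {mpoly R[n]})^`M(l) = (i == l)%:R :> {mpoly R[n]}.
Proof.
rewrite mderivX mnm1E; case: eqP => [->|_]; last by rewrite scale0r.
have -> : (U_(l) - U_(l) = 0)%MM.
  by apply/mnmP => j; rewrite mnmBE subnn mnm0E.
by rewrite mpolyX0 scale1r.
Qed.

Lemma chain_rule k (lq : n.-tuple {mpoly R[k]}) (j : 'I_k) p :
  (p \mPo lq)^`M(j) = \sum_(l < n) (p^`M(l) \mPo lq) * (tnth lq l)^`M(j).
Proof.
elim/mpoly_gen_ind: p.
- move=> c; rewrite comp_mpolyC mderivC; apply/esym/big1 => l _.
  by rewrite mderivC comp_mpoly0 mul0r.
- move=> i; rewrite comp_mpolyXU -tnth_nth (bigD1 i) //= big1 ?addr0.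
    by rewrite mderivXi eqxx comp_mpoly1 mul1r.
  by move=> l /negbTE hl; rewrite mderivXi eq_sym hl comp_mpoly0 mul0r.
- move=> p q hp hq; rewrite comp_mpolyD mderivD hp hq -big_split /=.
  by apply: eq_bigr => l _; rewrite mderivD comp_mpolyD mulrDl.
- move=> p q hp hq; rewrite rmorphM /= mderivM hp hq mulr_suml mulr_sumr -big_split /=.
  apply: eq_bigr => l _; rewrite mderivM comp_mpolyD !rmorphM /= mulrDl.
  congr (_ + _); rewrite -!mulrA; congr (_ * _); exact: mulrC.
Qed.

Lemma comp_mpolyA k r (lq : n.-tuple {mpoly R[k]}) (lr : k.-tuple {mpoly R[r]}) p :
  (p \mPo lq) \mPo lr = p \mPo [tuple (tnth lq i \mPo lr) | i < n].
Proof.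
elim/mpoly_gen_ind: p.
- by move=> c; rewrite !comp_mpolyC.
- by move=> i; rewrite !comp_mpolyXU -!tnth_nth tnth_mktuple.
- by move=> p q hp hq; rewrite !comp_mpolyD hp hq.
- by move=> p q hp hq; rewrite !rmorphM /= hp hq.
Qed.

Lemma mderiv_nil (i : 'I_n) (p : {mpoly R[n]}) : iter (msize p) (mderiv i) p = 0.
Proof.
rewrite -mderivn_iter mderivnE big_seq big1 // => m hm.
rewrite ffact_small ?mul0r ?scale0r //.
apply: leq_ltn_trans (msize_mdeg_lt hm).
by rewrite mdegE (bigD1 i) //= leq_addr.
Qed.


Lemma cofactor_eq (A B : 'M[R]_n) i j :
  (forall r c, r != i -> B r c = A r c) -> cofactor B i j = cofactor A i j.
Proof.
move=> h; rewrite /cofactor; congr (_ * \det _).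
by apply/matrixP => k l; rewrite !mxE; apply: h; rewrite eq_sym neq_lift.
Qed.

Lemma det_row_comb (A B : 'M[R]_n) i (cc : 'I_n -> R) :
  (forall r c, r != i -> B r c = A r c) ->
  (forall c, B i c = \sum_l cc l * A l c) -> \det B = cc i * \det A.
Proof.
move=> hr hi; rewrite (expand_det_row B i).
transitivity (\sum_j \sum_l cc l * (A l j * cofactor A i j)).
  apply: eq_bigr => j _; rewrite hi (cofactor_eq _ hr) mulr_suml.
  by apply: eq_bigr => l _; rewrite mulrA.
rewrite exchange_big /=.
transitivity (\sum_l cc l * ((A *m \adj A) l i)).
  apply: eq_bigr => l _; rewrite -mulr_sumr mxE; congr (_ * _).
  by apply: eq_bigr => j _; rewrite [\adj A j i]mxE.
rewrite mul_mx_adj (bigD1 i) //= big1 ?addr0; first by rewrite mxE eqxx mulr1n.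
by move=> l hl; rewrite mxE (negbTE hl) mulr0n mulr0.
Qed.

End Aux.

Theorem lemma4 (K : closedFieldType) (charK0 : [pchar K] =i pred0) (n : nat)
  (f g : n.-tuple {mpoly K[n]}) (lambda : K)
  (hinv : poly_inverse f g)
  (hlam : lambda != 0) (hjac : jac f = lambda%:MP) :
  (forall (i : 'I_n) (P : {mpoly K[n]}),
     Delta g i (P \mPo g) = delta lambda i P \mPo g /\
     Delta g i P \mPo f = delta lambda i (P \mPo f)) /\
  (forall i : 'I_n, locally_nilpotent (Delta g i)).
Proof.
have [hfg hgf] := hinv.
have hjac' : \det (jacobian_mx f) = lambda%:MP := hjac.
have hdetg : \det (jacobian_mx g) = lambda^-1%:MP.
  have hM : map_mx (comp_mpoly g) (jacobian_mx f) *m jacobian_mx g = 1%:M.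
    apply/matrixP => a b; rewrite !mxE.
    transitivity ((tnth f a \mPo g)^`M(b)).
      by rewrite chain_rule; apply: eq_bigr => l _; rewrite !mxE.
    by rewrite hfg mderivXi.
  have := congr1 determinant hM; rewrite det_mulmx det_map_mx det1 hjac' /= comp_mpolyC.
  move=> h.
  have : lambda^-1%:MP * (lambda%:MP * \det (jacobian_mx g)) = lambda^-1%:MP * 1 by rewrite h.
  by rewrite mulrA -mpolyCM mulVf // mpolyC1 mul1r mulr1.
have hc1 : forall i P, Delta g i (P \mPo g) = delta lambda i P \mPo g.
  move=> i P; rewrite /Delta /jac /delta.
  have -> : \det (jacobian_mx (replace_at g i (P \mPo g))) =
            (P^`M(i) \mPo g) * \det (jacobian_mx g).
    apply: (det_row_comb (cc := fun l => P^`M(l) \mPo g)).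
    - by move=> r c hr; rewrite !mxE tnth_mktuple (negbTE hr).
    - move=> c; rewrite !mxE tnth_mktuple eqxx chain_rule.
      by apply: eq_bigr => l _; rewrite mxE.
  by rewrite hdetg comp_mpolyZ -mul_mpolyC mulrC.
have hfg' : forall Q : {mpoly K[n]}, (Q \mPo f) \mPo g = Q.
  move=> Q; rewrite comp_mpolyA.
  have -> : [tuple tnth f i \mPo g | i < n] = [tuple 'X_i | i < n].
    by apply: eq_mktuple => i; exact: hfg.
  exact: comp_mpoly_id.
have hgf' : forall Q : {mpoly K[n]}, (Q \mPo g) \mPo f = Q.
  move=> Q; rewrite comp_mpolyA.
  have -> : [tuple tnth g i \mPo f | i < n] = [tuple 'X_i | i < n].
    by apply: eq_mktuple => i; exact: hgf.
  exact: comp_mpoly_id.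
have hc2 : forall i P, Delta g i P \mPo f = delta lambda i (P \mPo f).
  by move=> i P; have := hc1 i (P \mPo f); rewrite hfg' => ->; rewrite hgf'.
split; first by move=> i P; split; [exact: hc1 | exact: hc2].
move=> i P; exists (msize (P \mPo f)).
have hit : forall m Q, iter m (Delta g i) Q \mPo f = iter m (delta lambda i) (Q \mPo f).
  by elim => //= m ih Q; rewrite hc2 ih.
have hd : forall m Q, exists c, iter m (delta lambda i) Q = c *: iter m (mderiv i) Q.
  elim => [|m ih] Q /=; first by exists 1; rewrite scale1r.
  have [c ->] := ih Q; exists (lambda^-1 * c).
  by rewrite /delta mderivZ scalerA.
rewrite -(hfg' (iter _ _ P)) hit.
have [c ->] := hd (msize (P \mPo f)) (P \mPo f).
by rewrite mderiv_nil scaler0 comp_mpoly0.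
Qed.
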